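(* Let $L$ be a number field, $\Gamma$ an order of $L$, $K\subseteq L$ a subfield with ring of integers $\mathcal O_K$ and $n=[L:K]$, and $R=\mathrm M_n(\mathcal O_K)$. For each ring morphism $\rho:\Gamma\to R$ there exists a unique ring morphism $\varphi:K\to L$ such that $\rho$ is $\varphi$-compatible. In particular $\operatorname{Hom}(\Gamma,R)/R^\times=\bigsqcup_\varphi\bigl(\operatorname{Hom}_\varphi(\Gamma,R)/R^\times\bigr)$, the disjoint union over all ring morphisms $\varphi:K\to L$.
   Context: For a ring morphism $\varphi:K\to L$, regard $L$ as a $K$-algebra via $\varphi$ and $\mathrm M_n(K)$ as a $K$-algebra via scalar matrices. A ring morphism $\rho:\Gamma\to R$ is $\varphi$-compatible if $\rho\otimes\mathbb Q:L=\Gamma\otimes_{\mathbb Z}\mathbb Q\to R\otimes_{\mathbb Z}\mathbb Q=\mathrm M_n(K)$ is a morphism of $K$-algebras. $\operatorname{Hom}_\varphi(\Gamma,R)$ is the set of $\varphi$-compatible ring morphisms, stable under conjugation by $R^\times$. *)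

(* Defs.v *)
From HB Require Import structures.
From mathcomp Require Import all_boot all_order all_algebra all_field.
Set Implicit Arguments. Unset Strict Implicit. Unset Printing Implicit Defensive.
Import GRing.Theory.
Local Open Scope ring_scope.

(* Number field: L : fieldExtType rat (finite-dimensional over Q). *)

Definition integralZ (R : comNzRingType) (x : R) : Prop :=
  exists p : {poly int}, p \is monic /\ (map_poly (intr : int -> R) p).[x] = 0.

Definition is_order (L : fieldExtType rat) (G : {pred L}) : Prop :=
  [/\ 1 \in G,
      {in G &, forall x y, x * y \in G} &
      exists b : (\dim {:L}).-tuple L,
        basis_of fullv b /\
        forall x, x \in G <->
          exists z : 'I_(\dim {:L}) -> int, x = \sum_i (z i)%:~R *: b`_i].

Section Defs.
Variables (L : fieldExtType rat) (K : {subfield L}).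

Definition degLK : nat := \dim_K {:L}.

Definition mxOK (M : 'M[subvs_of K]_degLK) : Prop :=
  forall i j, integralZ (M i j).

Definition ring_hom_order (G : {pred L}) (rho : L -> 'M[subvs_of K]_degLK) : Prop :=
  [/\ forall x, x \in G -> mxOK (rho x),
      rho 1 = 1%:M,
      {in G &, forall x y, rho (x + y) = rho x + rho y} &
      {in G &, forall x y, rho (x * y) = rho x *m rho y}].

(* f : L -> M_n(K) is rho (x) Q, i.e. the Q-linear extension of rho from G to L *)
Definition tensorQ_ext (G : {pred L}) (rho f : L -> 'M[subvs_of K]_degLK) : Prop :=
  [/\ forall x y, f (x + y) = f x + f y,
      forall (a : rat) x, f (a *: x) = (ratr a : subvs_of K) *: f x &
      {in G, forall x, f x = rho x}].

Definition Kalg_morph (phi : {rmorphism subvs_of K -> L})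
    (f : L -> 'M[subvs_of K]_degLK) : Prop :=
  [/\ f 1 = 1%:M,
      forall x y, f (x + y) = f x + f y,
      forall x y, f (x * y) = f x *m f y &
      forall (k : subvs_of K) x, f (phi k * x) = k *: f x].

Definition compatible (G : {pred L}) (phi : {rmorphism subvs_of K -> L})
    (rho : L -> 'M[subvs_of K]_degLK) : Prop :=
  exists f, tensorQ_ext G rho f /\ Kalg_morph phi f.

Definition unitR (u : 'M[subvs_of K]_degLK) : Prop :=
  [/\ u \in unitmx, mxOK u & mxOK (invmx u)].

End Defs.

(* Main.v *)
Require Import Defs.
From HB Require Import structures.
From mathcomp Require Import all_boot all_order all_algebra all_field.
Local Open Scope ring_scope.
Import GRing.Theory.

Lemma expand_lin (L : fieldExtType rat) (F : fieldType) (V : lmodType F)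
  (N : nat) (b : N.-tuple L) (Hb : basis_of fullv b) (h : L -> V)
  (hD : forall x y, h (x + y) = h x + h y)
  (hZ : forall a x, h (a *: x) = ratr a *: h x) x :
  h x = \sum_i ratr (coord b i x) *: h b`_i.
Proof.
have h0 : h 0 = 0.
  have := hD 0 0; rewrite addr0 => /(congr1 (fun t => t - h 0)).
  by rewrite subrr addrK => /esym.
rewrite {1}(coord_basis Hb (memvf x)) (big_morph h hD h0).
by apply: eq_bigr => i _; rewrite hZ.
Qed.
Arguments expand_lin {L F V N b} Hb {h} hD hZ x.

Lemma nz_scalar1 (F : fieldType) n : (0 < n)%N -> (1%:M : 'M[F]_n) != 0.
Proof.
case: n => // n _; apply/eqP => /matrixP /(_ ord0 ord0).
by rewrite !mxE eqxx /= => /eqP; rewrite oner_eq0.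
Qed.

Lemma rows_zero (F : fieldType) n (A : 'M[F]_n) :
  (forall w : 'rV[F]_n, w *m A = 0) -> A = 0.
Proof.
move=> H; apply/row_matrixP => i; by rewrite rowE H row0.
Qed.

Lemma ext_lin (L : fieldExtType rat) (F : fieldType) (V : lmodType F)
  (N : nat) (b : N.-tuple L) (Hb : basis_of fullv b) (h1 h2 : L -> V)
  (h1D : forall x y, h1 (x + y) = h1 x + h1 y)
  (h1Z : forall a x, h1 (a *: x) = ratr a *: h1 x)
  (h2D : forall x y, h2 (x + y) = h2 x + h2 y)
  (h2Z : forall a x, h2 (a *: x) = ratr a *: h2 x)
  (E : forall i : 'I_N, h1 b`_i = h2 b`_i) x : h1 x = h2 x.
Proof.
rewrite (expand_lin Hb h1D h1Z) (expand_lin Hb h2D h2Z).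
by apply: eq_bigr => i _; rewrite E.
Qed.
Arguments ext_lin {L F V N b} Hb {h1 h2} h1D h1Z h2D h2Z E x.

Theorem lemma10p4 (L : fieldExtType rat) (K : {subfield L}) (G : {pred L})
    (HG : is_order G) (rho : L -> 'M[subvs_of K]_(degLK K))
    (Hrho : ring_hom_order G rho) :
  exists phi : {rmorphism subvs_of K -> L},
    [/\ compatible G phi rho,
        forall psi : {rmorphism subvs_of K -> L},
          compatible G psi rho -> psi =1 phi &
        forall u : 'M[subvs_of K]_(degLK K), unitR u ->
          compatible G phi (fun x => u *m rho x *m invmx u)].
Proof.
case: HG => G1 GM [b [Hb HbG]].
case: Hrho => _ rho1 rhoD rhoM.
have G0 : 0 \in G.
  by apply/HbG; exists (fun _ => 0); rewrite big1 // => i _; rewrite scale0r.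
have GB : {in G &, forall x y, x - y \in G}.
  move=> x y /HbG[z ->] /HbG[z' ->]; apply/HbG; exists (fun i => z i - z' i).
  by rewrite -sumrB; apply: eq_bigr => i _; rewrite intrB scalerBl.
have GD : {in G &, forall x y, x + y \in G}.
  move=> x y Gx Gy; have -> : x + y = x - (0 - y) by rewrite sub0r opprK.
  by rewrite GB // GB.
have Gb : forall i : 'I_(\dim {:L}), b`_i \in G.
  move=> i; apply/HbG; exists (fun j => if j == i then 1%R else 0%R).
  rewrite (bigD1 i) //= eqxx scale1r big1 ?addr0 // => j /negPf ->.
  by rewrite scale0r.
have rho0 : rho 0 = 0.
  have := rhoD 0 0 G0 G0; rewrite addr0 => /(congr1 (fun t => t - rho 0)).
  by rewrite subrr addrK => /esym.
have rhoB : {in G &, forall x y, rho (x - y) = rho x - rho y}.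
  move=> x y Gx Gy; have := rhoD (x - y) y (GB x y Gx Gy) Gy.
  by rewrite subrK => ->; rewrite addrK.
have rhoZ : forall (m : int) x, x \in G ->
    (m%:~R *: x \in G) /\ rho (m%:~R *: x) = m%:~R *: rho x.
  move=> m x Gx; rewrite !scaler_int.
  have Hn : forall k : nat, x *+ k \in G /\ rho (x *+ k) = rho x *+ k.
    elim=> [|k [Gk Rk]]; first by rewrite !mulr0n.
    by rewrite !mulrS rhoD // Rk; split => //; apply: GD.
  case: m => k; first exact: Hn.
  rewrite NegzE !mulrNz -!pmulrn; have [Gk Rk] := Hn k.+1.
  split; first by rewrite -sub0r GB.
  by rewrite -(sub0r (x *+ _)) rhoB // rho0 sub0r Rk.
have rho_sum : forall z : 'I_(\dim {:L}) -> int,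
    rho (\sum_i (z i)%:~R *: b`_i) = \sum_i (z i)%:~R *: rho b`_i.
  move=> z.
  suff [] : (\sum_i (z i)%:~R *: b`_i) \in G /\
     rho (\sum_i (z i)%:~R *: b`_i) = \sum_i (z i)%:~R *: rho b`_i by [].
  apply: (big_ind2 (fun s t => s \in G /\ rho s = t)).
  - by split; [exact: G0 | exact: rho0].
  - move=> s1 t1 s2 t2 [Gs1 R1] [Gs2 R2]; split; first exact: GD.
    by rewrite rhoD // R1 R2.
  - by move=> i _; apply: rhoZ (Gb i).
have ratrF : forall a : rat, vsval (ratr a : subvs_of K) = in_alg L a.
  move=> a; apply: (etrans (fmorph_rat vsval a)).
  exact/esym/(fmorph_eq_rat (in_alg L)).
have ratrD : forall a c : rat, (ratr (a + c) : subvs_of K) = ratr a + ratr c.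
  move=> a c; apply: (can_inj (@vsvalK _ _ K)); rewrite (rmorphD vsval).
  apply: (etrans (ratrF _)); rewrite rmorphD; congr (_ + _); exact/esym/ratrF.
have ratrM : forall a c : rat, (ratr (a * c) : subvs_of K) = ratr a * ratr c.
  move=> a c; apply: (can_inj (@vsvalK _ _ K)); rewrite (rmorphM vsval).
  apply: (etrans (ratrF _)); rewrite rmorphM; congr (_ * _); exact/esym/ratrF.
pose f : L -> 'M[subvs_of K]_(degLK K) :=
  fun x => \sum_i (ratr (coord b i x) : subvs_of K) *: rho b`_i.
have fD : forall x y, f (x + y) = f x + f y.
  move=> x y; rewrite /f -big_split; apply: eq_bigr => i _ /=.
  by rewrite linearD ratrD scalerDl.
have fZ : forall (a : rat) x, f (a *: x) = (ratr a : subvs_of K) *: f x.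
  move=> a x; rewrite /f scaler_sumr; apply: eq_bigr => i _ /=.
  by rewrite linearZ /= ratrM scalerA.
have fG : forall x, x \in G -> f x = rho x.
  move=> x /HbG[z ->]; rewrite rho_sum /f; apply: eq_bigr => i _.
  by rewrite coord_sum_free ?(basis_free Hb) // ratr_int.
have f1 : f 1 = 1%:M by rewrite fG.
have fB : forall x y, f (x - y) = f x - f y.
  by move=> x y; have := fD (x - y) y; rewrite subrK => ->; rewrite addrK.
have step1 : forall (j : 'I_(\dim {:L})) x, f (x * b`_j) = f x *m f b`_j.
  move=> j; apply: (ext_lin Hb).
  - by move=> x y; rewrite mulrDl fD.
  - by move=> a x; rewrite -scalerAl fZ.
  - by move=> x y; rewrite fD mulmxDl.
  - by move=> a x; rewrite fZ scalemxAl.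
  - by move=> i; rewrite !fG ?rhoM ?GM ?Gb.
have fM : forall x y, f (x * y) = f x *m f y.
  move=> x; apply: (ext_lin Hb).
  - by move=> y z; rewrite mulrDr fD.
  - by move=> a y; rewrite -scalerAr fZ.
  - by move=> y z; rewrite fD mulmxDr.
  - by move=> a y; rewrite fZ scalemxAr.
  - by move=> i; apply: step1.
have n_gt0 : (0 < degLK K)%N.
  by rewrite /degLK divn_gt0 ?adim_gt0 // dimvS // subvf.
have fI : forall x, f x = 0 -> x = 0.
  move=> x fx0; apply/eqP; apply: contraT => nx0.
  have := fM x x^-1; rewrite mulfV // f1 fx0 mul0mx => /eqP.
  by rewrite (negbTE (nz_scalar1 _ _ n_gt0)).
have fInj : injective f.
  by move=> x y fxy; apply/eqP; rewrite -subr_eq0; apply/eqP/fI; rewrite fB fxy subrr.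
pose i0 : 'I_(degLK K) := Ordinal n_gt0.
pose v0 : 'rV[subvs_of K]_(degLK K) := delta_mx 0 i0.
have v0_nz : v0 != 0.
  apply/eqP => /matrixP /(_ 0 i0); rewrite !mxE !eqxx /= => /eqP.
  by rewrite oner_eq0.
pose h := fun x => v0 *m f x.
have hB : forall x y, h (x - y) = h x - h y.
  by move=> x y; rewrite /h fB mulmxBr.
have hI : forall x, h x = 0 -> x = 0.
  move=> x hx0; apply/eqP; apply: contraT => nx0; case/eqP: v0_nz.
  by rewrite -(mulmx1 v0) -f1 -(mulfV nx0) fM mulmxA -/(h x) hx0 mul0mx.
have dimL' : \dim (fullv : {vspace fieldOver K}) = degLK K.
  have -> : (fullv : {vspace fieldOver K}) = vspaceOver K fullv.
    apply/vspaceP => v; rewrite mem_vspaceOver memvf.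
    have : 1 * (v : L) \in (K * fullv)%VS by rewrite memv_mul ?mem1v ?memvf.
    by rewrite mul1r.
  by rewrite dim_vspaceOver // subvf.
have [e He] : exists e : (degLK K).-tuple (fieldOver K), basis_of fullv e.
  by rewrite -dimL'; exists (vbasis fullv); exact: vbasisP.
pose r := fun w : 'rV[subvs_of K]_(degLK K) =>
  (\sum_i w 0 i *: e`_i : fieldOver K).
have rB : forall w1 w2, r (w1 - w2) = r w1 - r w2.
  by move=> w1 w2; rewrite /r -sumrB; apply: eq_bigr => i _; rewrite !mxE scalerBl.
have r0 : forall w, r w = 0 -> w = 0.
  move=> w rw0; move/freeP: (basis_free He) => /(_ (fun i => w 0 i) rw0) H.
  by apply/rowP => i; rewrite mxE H.
pose g := fun x : L => (r (h x) : L).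
have gB : GRing.zmod_morphism g.
  by move=> x y; rewrite /g hB rB.
have gI : injective g.
  move=> x y gxy; apply/eqP; rewrite -subr_eq0; apply/eqP/hI/r0.
  by rewrite hB rB; apply/eqP; rewrite subr_eq0; apply/eqP.
have gZ : scalable g := rat_linear gB.
have glin : linear g.
  pose gA : {additive L -> L} := HB.pack g (GRing.isZmodMorphism.Build _ _ g gB).
  by move=> a x y; rewrite -gZ; apply: (raddfD gA).
pose gL : {linear L -> L} := HB.pack g (GRing.isLinear.Build rat L L *:%R g glin).
have T0 : lker (linfun gL) == 0%VS.
  by apply/lker0P => x y; rewrite !lfunE; apply: gI.
have gS : forall y, exists x, g x = y.
  move=> y; have : y \in limg (linfun gL) by rewrite lker0_limgf // memvf.
  by case/memv_imgP => x _ ->; exists x; rewrite lfunE.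
have hS : forall w, exists x, h x = w.
  move=> w; have [x gx] := gS (r w); exists x.
  apply/eqP; rewrite -subr_eq0; apply/eqP/r0.
  by rewrite rB; apply/eqP; rewrite subr_eq0; apply/eqP.
have Hex : forall k : subvs_of K, exists x, f x == k%:M.
  move=> k; have [x hx] := hS (k *: v0); exists x; apply/eqP.
  apply/eqP; rewrite -subr_eq0; apply/eqP; apply: rows_zero => w.
  have [y <-] := hS w.
  have E1 : v0 *m f y *m f x = k *: (v0 *m f y).
    rewrite -mulmxA -fM mulrC fM mulmxA; rewrite -/(h x) hx; exact/esym/scalemxAl.
  by rewrite mulmxBr E1 mul_mx_scalar subrr.
pose phi := fun k => xchoose (Hex k).
have fphi : forall k, f (phi k) = k%:M.
  by move=> k; apply/eqP; exact: (xchooseP (Hex k)).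
have phiB : GRing.zmod_morphism phi.
  by move=> k l; apply: fInj; rewrite fB !fphi raddfB.
have phiM : GRing.monoid_morphism phi.
  split; first by apply: fInj; rewrite fphi f1.
  by move=> k l; apply: fInj; rewrite fM !fphi scalar_mxM.
pose phiR : {rmorphism subvs_of K -> L} := HB.pack phi
  (GRing.isZmodMorphism.Build _ _ phi phiB)
  (GRing.isMonoidMorphism.Build _ _ phi phiM).
exists phiR; split.
- exists f; split; first by split.
  split=> //; move=> k x /=; by rewrite fM fphi mul_scalar_mx.
- move=> psi [f' [[f'D f'Z f'G] [f'1 _ _ f'k]]] k /=.
  have ff : forall x, f' x = f x.
    apply: (ext_lin Hb) => //= i; by rewrite f'G ?Gb // fG ?Gb.
  by apply: fInj; rewrite fphi -ff -[psi k]mulr1 f'k f'1 scalemx1.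
- move=> u [uU _ _]; exists (fun x => u *m f x *m invmx u); split; split.
  + by move=> x y; rewrite fD mulmxDr mulmxDl.
  + by move=> a x; rewrite fZ -scalemxAr -scalemxAl.
  + by move=> x Gx /=; rewrite fG.
  + by rewrite f1 mulmx1 mulmxV.
  + by move=> x y; rewrite fD mulmxDr mulmxDl.
  + by move=> x y; rewrite fM !mulmxA mulmxKV.
  + by move=> k x /=; rewrite fM fphi mul_scalar_mx -scalemxAr -scalemxAl.
Qed.
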